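(* There exists a sequence $\{a_n\}_{n\geq 0}$ with $a_n\in\{0,1\}$ for all $n$ that does not converge, whereas $\{a^*_n\}_{n\geq 0}$ converges and $\{a^p_n\}_{n\geq 0}$ converges for every $0<p<1$.
   Context: For a real sequence $\{a_n\}_{n\geq0}$ and $0<p<1$, $a^*_n=\frac{1}{n+1}\sum_{i=0}^n a_i$ and $a^p_n=\sum_{i=0}^n\binom{n}{i}p^i(1-p)^{n-i}a_i$. *)

(* Defs.v *)
From Stdlib Require Import Reals.
From Coquelicot Require Import Coquelicot.
Open Scope R_scope.

Definition cesaro (a : nat -> R) (n : nat) : R :=
  / INR (S n) * sum_f_R0 a n.

Definition euler_mean (p : R) (a : nat -> R) (n : nat) : R :=
  sum_f_R0 (fun i => Binomial.C n i * p ^ i * (1 - p) ^ (n - i) * a i) n.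

(* Main.v *)
Require Import Defs.
From Stdlib Require Import Reals Lra Lia.
From Coquelicot Require Import Coquelicot.
Open Scope R_scope.

Definition alt (n : nat) : R := (1 + (-1) ^ n) / 2.

Lemma m1_pow (n : nat) : (-1) ^ n = 1 \/ (-1) ^ n = -1.
Proof.
  induction n as [|n IH]; simpl; [left; lra|].
  destruct IH as [H|H]; rewrite H; lra.
Qed.

Lemma alt_sum (n : nat) : sum_f_R0 alt n = (INR n + 1) / 2 + (1 + (-1) ^ n) / 4.
Proof.
  induction n as [|n IH]; unfold alt in *; simpl.
  - lra.
  - rewrite IH. destruct n; simpl; lra.
Qed.

Lemma alt_euler (p : R) (n : nat) :
  euler_mean p alt n = / 2 * (p + (1 - p)) ^ n + / 2 * (- p + (1 - p)) ^ n.
Proof.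
  unfold euler_mean. rewrite !binomial, !scal_sum, <- sum_plus.
  apply sum_eq; intros i _. unfold alt.
  replace (- p) with ((-1) * p) by ring. rewrite Rpow_mult_distr. field.
Qed.

Theorem proposition1 :
  exists a : nat -> R,
    (forall n, a n = 0 \/ a n = 1) /\
    ~ ex_finite_lim_seq a /\
    ex_finite_lim_seq (cesaro a) /\
    (forall p : R, 0 < p < 1 -> ex_finite_lim_seq (euler_mean p a)).
Proof.
  exists alt. split; [|split; [|split]].
  - intro n; unfold alt; destruct (m1_pow n) as [H|H]; rewrite H; [right|left]; lra.
  - intros [l Hl].
    assert (H1 := proj1 (is_lim_seq_incr_1 alt l) Hl).
    assert (Hs := is_lim_seq_plus' _ _ _ _ Hl H1).
    assert (Hm := is_lim_seq_mult' _ _ _ _ Hl H1).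
    assert (E1 : is_lim_seq (fun n => alt n + alt (S n)) 1).
    { eapply is_lim_seq_ext; [|apply is_lim_seq_const].
      intro n; unfold alt; simpl; lra. }
    assert (E0 : is_lim_seq (fun n => alt n * alt (S n)) 0).
    { eapply is_lim_seq_ext; [|apply is_lim_seq_const].
      intro n; unfold alt; simpl; destruct (m1_pow n) as [H|H]; rewrite H; lra. }
    apply is_lim_seq_unique in Hs, Hm, E1, E0.
    rewrite Hs in E1. rewrite Hm in E0.
    injection E1; injection E0; intros. nra.
  - exists (1/2).
    assert (Hinv : is_lim_seq (fun n => / INR (S n)) 0).
    { assert (H := is_lim_seq_inv (fun n => INR (S n)) p_infty).
      simpl in H. apply H; [|discriminate].
      apply (proj1 (is_lim_seq_incr_1 INR p_infty)). apply is_lim_seq_INR. }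
    apply is_lim_seq_le_le with (u := fun _ => 1/2)
      (w := fun n => 1/2 + / 2 * / INR (S n)).
    + intro n. unfold cesaro. rewrite alt_sum.
      assert (HP : 0 < INR (S n)) by (apply lt_0_INR; lia).
      rewrite S_INR in *.
      replace (/ (INR n + 1) * ((INR n + 1) / 2 + (1 + (-1) ^ n) / 4))
        with (1/2 + (1 + (-1)^n) / 4 * / (INR n + 1)) by (field; lra).
      assert (0 < / (INR n + 1)) by (apply Rinv_0_lt_compat; lra).
      destruct (m1_pow n) as [Hm|Hm]; rewrite Hm; nra.
    + apply is_lim_seq_const.
    + assert (H := is_lim_seq_plus' _ _ (1/2) (/2*0) (is_lim_seq_const (1/2))
                     (is_lim_seq_scal_l _ (/2) 0 Hinv)).
      replace (1/2 + /2*0) with (1/2) in H by ring. exact H.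
  - intros p Hp. exists (/2).
    eapply is_lim_seq_ext. { intro n. symmetry. apply alt_euler. }
    assert (A : is_lim_seq (fun n => (p + (1 - p)) ^ n) 1).
    { replace (p + (1 - p)) with 1 by ring.
      eapply is_lim_seq_ext; [|apply is_lim_seq_const]. intro n; simpl. rewrite pow1; auto. }
    assert (B : is_lim_seq (fun n => (- p + (1 - p)) ^ n) 0).
    { apply is_lim_seq_geom. apply Rabs_def1; lra. }
    assert (H := is_lim_seq_plus' _ _ _ _ (is_lim_seq_scal_l _ (/2) _ A) (is_lim_seq_scal_l _ (/2) _ B)).
    replace (/2 * 1 + /2 * 0) with (/2) in H by ring. exact H.
Qed.
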